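(* Let $L:\mathbb{R}^n\times\mathbb{R}^n\to\mathbb{R}$ be smooth (time-independent). For $a=(q_a,t_a)$, $b=(q_b,t_b)\in\mathbb{R}^n\times\mathbb{R}$ with $t_b\neq t_a$ put $$v(a,b)=\frac{q_b-q_a}{t_b-t_a},\qquad e(a,b)=L(q_a,v(a,b))-\langle D_2L(q_a,v(a,b)),v(a,b)\rangle .$$ Consider sequences $x_k=(q_k,t_k)$ (with $t_{k+1}\ne t_k$), and write $v_k=v(x_k,x_{k+1})$, $e_{k+1}=e(x_k,x_{k+1})$. The symplectic–energy Störmer-type scheme is $$e_{k+1}=e_k,\qquad (t_{k+1}-t_k)\,D_1L(q_k,v_k)-\big(D_2L(q_k,v_k)-D_2L(q_{k-1},v_{k-1})\big)=0 .$$ Then: (i) along any solution the energy $E_k:=\langle D_2L(q_{k-1},v_{k-1}),v_{k-1}\rangle-L(q_{k-1},v_{k-1})=-e_k$ is constant in $k$; (ii) if $U\subset(\mathbb{R}^n\times\mathbb{R})^2$ is open and $G:U\to(\mathbb{R}^n\times\mathbb{R})^2$ is smooth with $G(x_{k-1},x_k)=(x_k,x_{k+1})$ satisfying the scheme for every $(x_{k-1},x_k)\in U$, then, defining on $U$ the one-form $\theta^L=e(a,b)\,dt_b+\sum_i D_2L(q_a,v(a,b))_i\,dq_b^i$ and $\omega^L=d\theta^L$, we have $G^*\omega^L=\omega^L$ (the Lagrangian two-form is preserved).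
   Context: This scheme is the discrete Euler–Lagrange system obtained from the generalized discrete Hamilton's principle with time as a generalized coordinate: parametric discrete Lagrangian $\bar L_d=\Delta_\tau t_k\,L(q_k,\Delta_\tau q_k/\Delta_\tau t_k)$ with forward differences $\Delta_\tau q_k=(q_{k+1}-q_k)/\tau$, $\Delta_\tau t_k=(t_{k+1}-t_k)/\tau$, and $e_{k+1}=\partial\bar L_d/\partial(\Delta_\tau t_k)$. *)

(* Defs.v *)
From HB Require Import structures.
From mathcomp Require Import all_boot all_order all_algebra.
From mathcomp Require Import all_classical all_reals.
From mathcomp Require Import topology normedtype derive.
Set Implicit Arguments. Unset Strict Implicit. Unset Printing Implicit Defensive.
Import Order.TTheory GRing.Theory Num.Theory.
Import numFieldNormedType.Exports.
Local Open Scope classical_set_scope.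
Local Open Scope ring_scope.

Section Defs.
Variable R : realType.

Fixpoint iderive (V W : normedModType R) (vs : seq V) (f : V -> W) : V -> W :=
  match vs with
  | [::] => f
  | v :: vs' => fun x => derive (iderive vs' f) x v
  end.

Definition smooth_on (V W : normedModType R) (U : set V) (f : V -> W) :=
  forall (vs : seq V) (x : V), U x -> differentiable (iderive vs f) x.

Definition smooth (V W : normedModType R) (f : V -> W) := smooth_on setT f.

Variable n : nat.
Definition pt := ('rV[R]_n * R)%type.
Definition st := (pt * pt)%type.

Variable L : 'rV[R]_n * 'rV[R]_n -> R.

Definition D1L (q v w : 'rV[R]_n) : R := derive L (q, v) (w, 0).
Definition D2L (q v w : 'rV[R]_n) : R := derive L (q, v) (0, w).

Definition vel (a b : pt) : 'rV[R]_n := (b.2 - a.2)^-1 *: (b.1 - a.1).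

Definition ener (a b : pt) : R :=
  L (a.1, vel a b) - D2L a.1 (vel a b) (vel a b).

(* The discrete Euler-Lagrange
   equation is an equality of covectors, i.e. it holds on every w in R^n. *)
Definition scheme (xm x xp : pt) : Prop :=
  ener x xp = ener xm x /\
  forall w : 'rV[R]_n,
    (xp.2 - x.2) * D1L x.1 (vel x xp) w
    - (D2L x.1 (vel x xp) w - D2L xm.1 (vel xm x) w) = 0.

Definition energy (xm x : pt) : R :=
  D2L xm.1 (vel xm x) (vel xm x) - L (xm.1, vel xm x).

(* theta^L at p = (a,b), applied to the tangent vector d = (da, db),
   db = (dq_b, dt_b):  e(a,b) dt_b + sum_i D_2L(q_a,v(a,b))_i dq_b^i *)
Definition thetaL (p d : st) : R :=
  ener p.1 p.2 * d.2.2 + D2L p.1.1 (vel p.1 p.2) d.2.1.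

(* omega^L = d theta^L, evaluated on (constant) tangent vectors u, w *)
Definition omegaL (p u w : st) : R :=
  derive (fun x => thetaL x w) p u - derive (fun x => thetaL x u) p w.

Definition pullback_omegaL (G : st -> st) (p u w : st) : R :=
  omegaL (G p) (derive G p u) (derive G p w).

End Defs.

(* Main.v *)
Require Import Defs.
From HB Require Import structures.
From mathcomp Require Import all_boot all_order all_algebra.
From mathcomp Require Import all_classical all_reals.
From mathcomp Require Import topology normedtype derive landau.
From mathcomp Require Import ring lra.
Import Order.TTheory GRing.Theory Num.Theory.
Import numFieldNormedType.Exports.
Local Open Scope classical_set_scope.
Local Open Scope ring_scope.

Section Gen2.
Variable R : realType.
Local Set Implicit Arguments.
Local Unset Strict Implicit.

Lemma derive_line (V W : normedModType R) (f : V -> W) (x w : V) (t0 : R) :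
  derivable f (x + t0 *: w) w ->
  is_derive t0 1 (fun t : R => f (x + t *: w)) ('D_w f (x + t0 *: w)).
Proof.
move=> df.
have E : (fun h : R => h^-1 *: (((fun t : R => f (x + t *: w)) \o shift t0) (h *: 1)
            - f (x + t0 *: w))) =
         (fun h : R => h^-1 *: ((f \o shift (x + t0 *: w)) (h *: w) - f (x + t0 *: w))).
  apply/funext => h /=; congr (_ *: (f _ - _)).
  by rewrite [h *: 1]mulr1 scalerDl addrCA addrA.
split; first by rewrite /derivable /= E.
by rewrite /derive /= E.
Qed.

Lemma schwarz_half (V : normedModType R) (f gw : V -> R) (p u w : V) :
  (\forall y \near p, derivable f y w /\ 'D_w f y = gw y) ->
  differentiable gw p ->
  forall e, 0 < e -> exists2 d, 0 < d & forall s, 0 < s -> s < d ->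
    `|(f (p + s *: u + s *: w) - f (p + s *: u) - f (p + s *: w) + f p)
       - s ^+ 2 * 'd gw p u| <= e * s ^+ 2.
Proof.
move=> hder hdiff e e0.
set D := 'd gw p.
pose K := `|u| + 2 * `|w| + 1.
have K0 : 0 < K by rewrite /K; have := normr_ge0 u; have := normr_ge0 w; lra.
pose e' := e / K.
have e'0 : 0 < e' by rewrite /e' divr_gt0.
have [d1 d10 H1] : exists2 d1, 0 < d1 & forall z, `|z| < d1 ->
    `|gw (p + z) - gw p - D z| <= e' * `|z|.
  have := diff_locally hdiff => /eqaddoP /(_ e' e'0) /nbhs_norm0P [d d0 Hd].
  exists d => // z zd; have := Hd z zd => /=.
  suff -> : gw (p + z) - gw p - D z =
     ((gw \o shift p) - (cst (gw p) + 'd gw p)) z by [].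
  by rewrite !fctE /= [z + p]addrC opprD addrA.
have [d2 d20 H2] : exists2 d2, 0 < d2 & forall z, `|z| < d2 ->
    derivable f (p + z) w /\ 'D_w f (p + z) = gw (p + z).
  by move: hder => /nbhs0P /nbhs_norm0P [d d0 Hd]; exists d.
pose K' := `|u| + `|w| + 1.
have K'0 : 0 < K' by rewrite /K'; have := normr_ge0 u; have := normr_ge0 w; lra.
exists (Num.min d1 d2 / K'); first by rewrite divr_gt0 // lt_min d10 d20.
move=> s s0 sd.
have sK : s * K' < Num.min d1 d2 by rewrite -ltr_pdivlMr.
have sK1 : s * K' < d1 by apply: (lt_le_trans sK); rewrite ge_min lexx.
have sK2 : s * K' < d2 by apply: (lt_le_trans sK); rewrite ge_min lexx orbT.
have bnd : forall t, 0 <= t <= s -> `|s *: u + t *: w| <= s * (`|u| + `|w|) /\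
                                   `|t *: w| <= s * `|w|.
  move=> t /andP[t0 ts].
  have h1 : `|t *: w| <= s * `|w|.
    by rewrite normrZ ger0_norm // ler_wpM2r.
  split => //.
  apply: (le_trans (ler_normD _ _)); rewrite normrZ gtr0_norm // mulrDr lerD2l //.
have nu := normr_ge0 u; have nw := normr_ge0 w.
have small1 : forall t, 0 <= t <= s -> `|s *: u + t *: w| < Num.min d1 d2.
  move=> t /bnd [h _]; apply: (le_lt_trans h); apply: le_lt_trans sK.
  rewrite /K' ler_wpM2l ?ltW //; lra.
have small2 : forall t, 0 <= t <= s -> `|t *: w| < Num.min d1 d2.
  move=> t /bnd [_ h]; apply: (le_lt_trans h); apply: le_lt_trans sK.
  rewrite /K' ler_wpM2l ?ltW //; lra.
pose g t := f (p + s *: u + t *: w) - f (p + t *: w).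
pose dg t := gw (p + s *: u + t *: w) - gw (p + t *: w).
have gd : forall t, 0 <= t <= s -> is_derive t 1 g (dg t).
  move=> t ht.
  have [a1 e1] : derivable f (p + s *: u + t *: w) w /\
      'D_w f (p + s *: u + t *: w) = gw (p + s *: u + t *: w).
    rewrite -addrA; apply: H2; apply: lt_le_trans (small1 t ht) _.
    by rewrite ge_min lexx orbT.
  have [a2 e2] : derivable f (p + t *: w) w /\ 'D_w f (p + t *: w) = gw (p + t *: w).
    apply: H2; apply: lt_le_trans (small2 t ht) _.
    by rewrite ge_min lexx orbT.
  have := is_deriveB (derive_line a1) (derive_line a2).
  by rewrite e1 e2.
have [c cin Hc] : exists2 c, c \in `]0, s[ & g s - g 0 = dg c * (s - 0).
  apply: MVT => //.
    move=> x; rewrite in_itv /= => /andP[x0 xs]; apply: gd.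
    by rewrite !ltW.
  apply: derivable_within_continuous => x; rewrite in_itv /= => hx.
  by have [] := gd x hx.
move: cin; rewrite in_itv /= => /andP[c0 cs].
have hc : 0 <= c <= s by rewrite !ltW.
have z1s : `|s *: u + c *: w| < d1.
  by apply: lt_le_trans (small1 c hc) _; rewrite ge_min lexx.
have z2s : `|c *: w| < d1.
  by apply: lt_le_trans (small2 c hc) _; rewrite ge_min lexx.
have r1 := H1 _ z1s.
have r2 := H1 _ z2s.
have [b1 b2] := bnd c hc.
have gE : g s - g 0 = f (p + s *: u + s *: w) - f (p + s *: u) - f (p + s *: w) + f p.
  by rewrite /g !scale0r !addr0; ring.
rewrite -gE Hc subr0 /dg -!addrA.
have DE : D (s *: u + c *: w) = s * D u + c * D w.
  by rewrite linearD !linearZ.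
have DE2 : D (c *: w) = c * D w by rewrite linearZ.
move: r1 r2; rewrite DE DE2.
set A := gw (p + (s *: u + c *: w)); set B := gw (p + c *: w).
set n1 := `|s *: u + c *: w|; set n2 := `|c *: w|.
move=> r1 r2.
have -> : (A - B) * s - s ^+ 2 * D u =
   ((A - gw p - (s * D u + c * D w)) - (B - gw p - c * D w)) * s.
  by ring.
rewrite normrM (gtr0_norm s0).
have := ler_normB (A - gw p - (s * D u + c * D w)) (B - gw p - c * D w).
set a1 := `|A - gw p - (s * D u + c * D w)|.
set a2 := `|B - gw p - c * D w|.
set N := `|_ - _|.
move=> hN.
have n1b : n1 <= s * (`|u| + `|w|) by [].
have n2b : n2 <= s * `|w| by [].
have eK : e' * K = e by rewrite /e' divfK // gt_eqF.
have : N * s <= (e' * n1 + e' * n2) * s.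
  by rewrite ler_pM2r //; apply: (le_trans hN); apply: lerD.
move=> h; apply: (le_trans h).
rewrite -eK /K.
have h2 : e' * n1 + e' * n2 <= e' * (s * (`|u| + 2 * `|w|)).
  rewrite -mulrDr ler_pM2l //; nra.
have h3 : (e' * n1 + e' * n2) * s <= e' * (s * (`|u| + 2 * `|w|)) * s.
  by rewrite ler_pM2r.
apply: (le_trans h3); rewrite expr2; nra.
Qed.


Lemma eq_of_small (x y : R) : (forall e, 0 < e -> `|x - y| <= e) -> x = y.
Proof.
move=> H.
have : `|x - y| <= 0.
  apply/ler_addgt0Pr => e e0; rewrite add0r; exact: H.
rewrite normr_le0 subr_eq0 => /eqP //.
Qed.

Lemma final_step (A B : R) (D1 D2 : R -> R) :
  (forall s, D1 s = D2 s) ->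
  (forall e, 0 < e -> exists2 d, 0 < d & forall s, 0 < s -> s < d ->
     `|D1 s - s ^+ 2 * A| <= e * s ^+ 2) ->
  (forall e, 0 < e -> exists2 d, 0 < d & forall s, 0 < s -> s < d ->
     `|D2 s - s ^+ 2 * B| <= e * s ^+ 2) -> A = B.
Proof.
move=> D12 HA HB; apply: eq_of_small => e e0.
have e20 : 0 < e / 2 by rewrite divr_gt0.
have [d1 d10 H1] := HA _ e20.
have [d2 d20 H2] := HB _ e20.
pose s := Num.min d1 d2 / 2.
have s0 : 0 < s by rewrite divr_gt0 // lt_min d10 d20.
have sm : s < Num.min d1 d2.
  rewrite /s ltr_pdivrMr // ltr_pMr ?lt_min ?d10 ?d20 //; lra.
have s1 : s < d1 by apply: (lt_le_trans sm); rewrite ge_min lexx.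
have s2 : s < d2 by apply: (lt_le_trans sm); rewrite ge_min lexx orbT.
have {H1}H1 := H1 s s0 s1.
have {H2}H2 := H2 s s0 s2.
rewrite -D12 in H2.
have : `|s ^+ 2 * (A - B)| <= e * s ^+ 2.
  have -> : s ^+ 2 * (A - B) = (D1 s - s ^+ 2 * B) - (D1 s - s ^+ 2 * A) by ring.
  apply: (le_trans (ler_normB _ _)).
  have -> : e * s ^+ 2 = e / 2 * s ^+ 2 + e / 2 * s ^+ 2.
    by rewrite -mulrDl -splitr.
  rewrite addrC; exact: lerD.
rewrite normrM ger0_norm ?sqr_ge0 // [e * _]mulrC ler_pM2l //.
by rewrite exprn_gt0.
Qed.

Lemma schwarz (V : normedModType R) (f gu gw : V -> R) (p u w : V) :
  (\forall y \near p, derivable f y u /\ 'D_u f y = gu y) ->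
  (\forall y \near p, derivable f y w /\ 'D_w f y = gw y) ->
  differentiable gu p -> differentiable gw p ->
  'D_u gw p = 'D_w gu p.
Proof.
move=> hu hw du dw; rewrite !deriveE //.
apply: (@final_step _ _
   (fun s => f (p + s *: u + s *: w) - f (p + s *: u) - f (p + s *: w) + f p)
   (fun s => f (p + s *: w + s *: u) - f (p + s *: w) - f (p + s *: u) + f p)).
- by move=> s; rewrite [p + s *: w + s *: u]addrAC; ring.
- exact: (@schwarz_half V f gw p u w hw dw).
- exact: (@schwarz_half V f gu p w u hu du).
Qed.

End Gen2.

Section Gen3.
Variable R : realType.
Local Set Implicit Arguments.
Local Unset Strict Implicit.

Lemma line_derive (V W : normedModType R) (f : V -> W) (x v : V) (d : W) :
  is_derive (0 : R) 1 (fun t : R => f (t *: v + x)) d -> is_derive x v f d.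
Proof.
move=> [df dv].
have E : (fun h : R => h^-1 *: (((fun t : R => f (t *: v + x)) \o shift 0) (h *: 1)
            - f (0 *: v + x))) =
         (fun h : R => h^-1 *: ((f \o shift x) (h *: v) - f x)).
  by apply/funext => h /=; rewrite [h *: 1]mulr1 addr0 scale0r add0r.
have dx : derivable f x v by move: df; rewrite /derivable /= E.
split => //; rewrite -dv.
by rewrite /derive /= E.
Qed.

Lemma scal_const_derive (W : normedModType R) (c : R -> R) (t0 dc : R) (w : W) :
  is_derive t0 1 c dc -> is_derive t0 1 (fun t => c t *: w) (dc *: w).
Proof.
move=> [dc1 dcv].
have dcd : differentiable c t0 by apply/derivable1_diffP.
have dd : differentiable (fun t => c t *: w) t0 by apply: differentiableZl.
split; first exact: diff_derivable.
rewrite deriveE // diffZl //= -deriveE //.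
by rewrite dcv.
Qed.

Lemma pair_derive (V W : normedModType R) (f : R -> V) (g : R -> W) (t0 : R) df dg :
  is_derive t0 1 f df -> is_derive t0 1 g dg ->
  is_derive t0 1 (fun t => (f t, g t)) (df, dg).
Proof.
move=> [f1 fv] [g1 gv].
have fd : differentiable f t0 by apply/derivable1_diffP.
have gd : differentiable g t0 by apply/derivable1_diffP.
have pd : differentiable (fun t => (f t, g t)) t0 by apply: differentiable_pair.
split; first exact: diff_derivable.
by rewrite deriveE // diff_pair //= -!deriveE // fv gv.
Qed.

Lemma comp_derive (V W : normedModType R) (g : R -> V) (F : V -> W) (t0 : R) dg :
  is_derive t0 1 g dg -> differentiable F (g t0) ->
  is_derive t0 1 (fun t => F (g t)) ('d F (g t0) dg).
Proof.
move=> [g1 gv] dF.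
have gd : differentiable g t0 by apply/derivable1_diffP.
have cd : differentiable (F \o g) t0 by apply: differentiable_comp.
split; first exact: diff_derivable.
by rewrite deriveE // diff_comp //= -(@deriveE _ _ _ g t0 1 gd) gv.
Qed.

End Gen3.

Section Gen4.
Variable R : realType.
Local Set Implicit Arguments.
Local Unset Strict Implicit.

Lemma inv_derive (f : R -> R) (x df : R) :
  is_derive x 1 f df -> f x != 0 -> is_derive x 1 (fun y => (f y)^-1) (- (f x) ^- 2 *: df).
Proof.
move=> [d1 dv] fx; split; first exact: derivableV.
by rewrite deriveV // dv.
Qed.

Lemma affine_derive (a c : R) (t0 : R) : is_derive t0 1 (fun t : R => t * a + c) a.
Proof.
have h := is_deriveD (@scal_const_derive _ _ id t0 1 a (is_derive_id t0 1))
                     (is_derive_cst c t0 1).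
move: h; rewrite scale1r addr0.
by change (is_derive t0 1 (fun t : R => t * a + c) a -> is_derive t0 1 (fun t : R => t * a + c) a).
Qed.

Lemma affine_derive_v (V : normedModType R) (a c : V) (t0 : R) :
  is_derive t0 1 (fun t : R => t *: a + c) a.
Proof.
have h := is_deriveD (@scal_const_derive _ _ id t0 1 a (is_derive_id t0 1))
                     (is_derive_cst c t0 1).
move: h; rewrite scale1r addr0.
by change (is_derive t0 1 (fun t : R => t *: a + c) a -> is_derive t0 1 (fun t : R => t *: a + c) a).
Qed.

Lemma is_derive_ext (V W : normedModType R) (f g : V -> W) (x v : V) (d : W) :
  (forall t, f t = g t) -> is_derive x v f d -> is_derive x v g d.
Proof. by move=> e; have -> : f = g by apply/funext. Qed.

End Gen4.

Section Gen5.
Variable R : realType.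
Variable W : normedModType R.

Lemma scaler_is_bilinear :
  bilinear_for
    (GRing.Scale.Law.clone _ _ *:%R _) (GRing.Scale.Law.clone _ _ *:%R _)
    (@GRing.scale R W : R^o -> W -> W).
Proof.
split=> [u'|u] a x y /=.
- by rewrite scalerDl scalerA.
- by rewrite scalerDr !scalerA mulrC.
Qed.

HB.instance Definition _ := bilinear_isBilinear.Build R R^o W W _ _
  (@GRing.scale R W : R^o -> W -> W) scaler_is_bilinear.

Lemma differentiable_scale (p : R * W) :
  differentiable (fun q : R * W => q.1 *: q.2) p.
Proof.
apply: (@differentiable_bilin R R^o W W (@GRing.scale R W : R^o -> W -> W)).
move=> q; exact: scale_continuous.
Qed.


Lemma differentiableZ2 (V : normedModType R) (k : V -> R) (F : V -> W) x :
  differentiable k x -> differentiable F x -> differentiable (fun z => k z *: F z) x.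
Proof.
move=> dk dF.
have -> : (fun z => k z *: F z) = (fun q : R * W => q.1 *: q.2) \o (fun z => (k z, F z))
  by [].
apply: differentiable_comp; first exact: differentiable_pair.
exact: differentiable_scale.
Qed.

End Gen5.

Section Gen6.
Variable R : realType.
Variables U V : normedModType R.

Lemma fst_differentiable (x : U * V) : differentiable (@fst U V) x.
Proof.
have fl : linear (@fst U V) by [].
pose M := GRing.isLinear.Build _ _ _ _ _ fl.
pose F : {linear (U * V)%type -> U} := HB.pack (@fst U V) M.
apply: (linear_differentiable (f := F)).
by move=> y; apply: cvg_fst.
Qed.

Lemma snd_differentiable (x : U * V) : differentiable (@snd U V) x.
Proof.
have fl : linear (@snd U V) by [].
pose M := GRing.isLinear.Build _ _ _ _ _ fl.
pose F : {linear (U * V)%type -> V} := HB.pack (@snd U V) M.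
apply: (linear_differentiable (f := F)).
by move=> y; apply: cvg_snd.
Qed.

End Gen6.


Section Spec.
Variable R : realType.
Variable n : nat.
Variable L : 'rV[R]_n * 'rV[R]_n -> R.
Hypothesis hL : smooth L.

Lemma Ldiff x : differentiable L x.
Proof. exact: (hL [::] x I). Qed.

Lemma D1LE q v w : D1L L q v w = 'd L (q, v) (w, 0).
Proof. by rewrite /D1L deriveE //; apply: Ldiff. Qed.
Lemma D2LE q v w : D2L L q v w = 'd L (q, v) (0, w).
Proof. by rewrite /D2L deriveE //; apply: Ldiff. Qed.

Lemma pairD (a b c d : 'rV[R]_n) : ((a + b, c + d) : 'rV[R]_n * 'rV[R]_n) = (a, c) + (b, d).
Proof. by []. Qed.
Lemma pairZ (k : R) (a c : 'rV[R]_n) : ((k *: a, k *: c) : 'rV[R]_n * 'rV[R]_n) = k *: (a, c).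
Proof. by []. Qed.
Lemma pair0 : ((0, 0) : 'rV[R]_n * 'rV[R]_n) = 0.
Proof. by []. Qed.

Lemma D1LD q v a b : D1L L q v (a + b) = D1L L q v a + D1L L q v b.
Proof. by rewrite !D1LE -linearD -pairD addr0. Qed.
Lemma D2LD q v a b : D2L L q v (a + b) = D2L L q v a + D2L L q v b.
Proof. by rewrite !D2LE -linearD -pairD addr0. Qed.
Lemma D1LZ q v k a : D1L L q v (k *: a) = k * D1L L q v a.
Proof. by rewrite !D1LE -[k * _]/(k *: _) -linearZ -pairZ scaler0. Qed.
Lemma D2LZ q v k a : D2L L q v (k *: a) = k * D2L L q v a.
Proof. by rewrite !D2LE -[k * _]/(k *: _) -linearZ -pairZ scaler0. Qed.
Lemma D1L0 q v : D1L L q v 0 = 0.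
Proof. by rewrite /D1L pair0 derive0. Qed.
Lemma D2L0 q v : D2L L q v 0 = 0.
Proof. by rewrite /D2L pair0 derive0. Qed.
Lemma D2LB q v a b : D2L L q v (a - b) = D2L L q v a - D2L L q v b.
Proof. by rewrite D2LD -scaleN1r D2LZ mulN1r. Qed.


Definition sig (b z : st R n) : R :=
  (b.2.2 - b.1.2) * ener L z.1 z.2
  + (z.2.2 - z.1.2) * D1L L z.1.1 (vel z.1 z.2) b.1.1
  + (D2L L z.1.1 (vel z.1 z.2) b.2.1 - D2L L z.1.1 (vel z.1 z.2) b.1.1).

Lemma sigD b c z : sig (b + c) z = sig b z + sig c z.
Proof.
rewrite /sig.
rewrite (_ : (b + c).1.1 = b.1.1 + c.1.1) // (_ : (b + c).2.1 = b.2.1 + c.2.1) //.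
rewrite (_ : (b + c).2.2 = b.2.2 + c.2.2) // (_ : (b + c).1.2 = b.1.2 + c.1.2) //.
rewrite D1LD !D2LD.
move: (ener L z.1 z.2) (z.2.2 - z.1.2) (D1L L z.1.1 (vel z.1 z.2) b.1.1)
  (D1L L z.1.1 (vel z.1 z.2) c.1.1) (D2L L z.1.1 (vel z.1 z.2) b.1.1)
  (D2L L z.1.1 (vel z.1 z.2) c.1.1) (D2L L z.1.1 (vel z.1 z.2) b.2.1)
  (D2L L z.1.1 (vel z.1 z.2) c.2.1) => *.
ring.
Qed.

Lemma theta_sig z w : thetaL L z w = sig (0, w.2) z.
Proof. by rewrite /thetaL /sig /= D1L0 D2L0; ring. Qed.

Lemma EL_sig (y : st R n) (Gy : st R n) :
  Gy.1 = y.2 -> scheme L y.1 y.2 Gy.2 ->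
  forall c : pt R n, sig (0, c) y + sig (c, 0) Gy = 0.
Proof.
move=> hG [he hw] c; rewrite /sig /= hG D1L0 !D2L0 he.
have := hw c.1; lra.
Qed.


Definition Sact (z : st R n) : R := (z.2.2 - z.1.2) * L (z.1.1, vel z.1 z.2).

Lemma S_derive (z b : st R n) : z.2.2 != z.1.2 -> is_derive z b Sact (sig b z).
Proof.
move=> hz; apply: line_derive.
set h0 := z.2.2 - z.1.2.
set dh := b.2.2 - b.1.2.
set Dq := z.2.1 - z.1.1.
set dDq := b.2.1 - b.1.1.
pose k := fun t : R => t * dh + h0.
pose g := fun t : R => (t *: b.1.1 + z.1.1, (k t)^-1 *: Dq + (t * (k t)^-1) *: dDq).
have E : forall t, Sact (t *: b + z) = k t * L (g t).
  move=> t; rewrite /Sact /vel /g /k /=.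
  have e1 : t *: b.2.2 + z.2.2 - (t *: b.1.2 + z.1.2) = t * dh + h0.
    change (t * b.2.2 + z.2.2 - (t * b.1.2 + z.1.2) = t * dh + h0).
    rewrite /dh /h0; ring.
  rewrite e1; congr (_ * L (_, _)).
  rewrite [t * (_)^-1]mulrC -scalerA -scalerDr; congr (_ *: _).
  by rewrite /Dq /dDq scalerBr opprD addrACA addrC.
have dk : is_derive (0 : R) 1 k dh := affine_derive dh h0 0.
have k0 : k 0 = h0 by rewrite /k mul0r add0r.
have k0n : k 0 != 0 by rewrite k0 /h0 subr_eq0.
have dm1 := inv_derive dk k0n.
have dm2 : is_derive (0 : R) 1 (fun t => t * (k t)^-1) ((k 0)^-1).
  have h := is_deriveM (is_derive_id (0 : R) 1) dm1.
  move: h; rewrite /= scale0r add0r [_ *: 1]mulr1.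
  by change (is_derive (0 : R) 1 (fun t => t * (k t)^-1) ((k 0)^-1) ->
             is_derive (0 : R) 1 (fun t => t * (k t)^-1) ((k 0)^-1)).
have dg2 := is_deriveD (scal_const_derive Dq dm1) (scal_const_derive dDq dm2).
have dg1 := affine_derive_v b.1.1 z.1.1 0.
have dg := pair_derive dg1 dg2.
have dLg := comp_derive dg (Ldiff (g 0)).
have dS := is_deriveM dk dLg.
apply: is_derive_eq; first by apply: (is_derive_ext _ dS) => t; rewrite E.
rewrite !fctE /= mul0r !scale0r add0r addr0 k0.
have vE : vel z.1 z.2 = h0^-1 *: Dq by [].
rewrite -vE.
rewrite (_ : ((b.1.1, _) : 'rV[R]_n * 'rV[R]_n) =
   (b.1.1, 0) + (0, (- h0 ^- 2 *: dh) *: Dq + h0^-1 *: dDq)); last first.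
  by rewrite -pairD addr0 add0r.
rewrite linearD -D1LE -D2LE D2LD !D2LZ.
have e : D2L L z.1.1 (vel z.1 z.2) (vel z.1 z.2) = h0^-1 * D2L L z.1.1 (vel z.1 z.2) Dq.
  by rewrite -D2LZ.
rewrite /sig /ener -/h0 -/dh e -D2LB -/dDq.
have hs : forall a c : R, a *: c = a * c by [].
have h0n : h0 != 0 by rewrite /h0 subr_eq0.
rewrite !hs; field.
exact: h0n.
Qed.

End Spec.

Section Gen7.
Variable R : realType.
Variables V W : normedModType R.
Local Set Implicit Arguments.
Local Unset Strict Implicit.

Lemma dB (f g : V -> W) x : differentiable f x -> differentiable g x ->
  differentiable (fun y => f y - g y) x.
Proof. move=> df dg; have := differentiableB df dg; by []. Qed.

Lemma dD (f g : V -> W) x : differentiable f x -> differentiable g x ->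
  differentiable (fun y => f y + g y) x.
Proof. move=> df dg; have := differentiableD df dg; by []. Qed.

Lemma dM (f g : V -> R) x : differentiable f x -> differentiable g x ->
  differentiable (fun y => f y * g y) x.
Proof. move=> df dg; have := differentiableM df dg; by []. Qed.

Lemma dV (f : V -> R) x : differentiable f x -> f x != 0 ->
  differentiable (fun y => (f y)^-1) x.
Proof. move=> df fx; have := differentiableV df fx; by []. Qed.

Lemma dC (c : W) x : differentiable (fun _ : V => c) x.
Proof. exact: differentiable_cst. Qed.

End Gen7.
Arguments dB {R V W f g x}.
Arguments dD {R V W f g x}.
Arguments dM {R V f g x}.
Arguments dV {R V f x}.
Arguments dC {R V W c x}.
Arguments differentiableZ2 {R W V k F x}.
Arguments sig {R n} L b z.
Arguments Sact {R n} L z.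
Arguments S_derive {R n L} hL z b.
Arguments sigD {R n L} hL b c z.
Arguments theta_sig {R n} L z w.
Arguments EL_sig {R n} L y Gy.

Section Spec2.
Variable R : realType.
Variable n : nat.
Variable L : 'rV[R]_n * 'rV[R]_n -> R.
Hypothesis hL : smooth L.

Let V2 := ('rV[R]_n * 'rV[R]_n)%type.

Lemma D2L_smooth w (x : V2) : differentiable (fun y : V2 => D2L L y.1 y.2 w) x.
Proof.
have -> : (fun y : V2 => D2L L y.1 y.2 w) = iderive [:: (0, w)] L.
  by apply/funext => -[a b].
exact: (hL [:: (0, w)] x I).
Qed.

Lemma D1L_smooth w (x : V2) : differentiable (fun y : V2 => D1L L y.1 y.2 w) x.
Proof.
have -> : (fun y : V2 => D1L L y.1 y.2 w) = iderive [:: (w, 0)] L.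
  by apply/funext => -[a b].
exact: (hL [:: (w, 0)] x I).
Qed.

Lemma D2L_sum q v (w : 'rV[R]_n) :
  D2L L q v w = \sum_(i < n) w 0 i * D2L L q v 'e_i.
Proof.
rewrite {1}(row_sum_delta w) (big_morph _ (@D2LD _ _ L hL q v) (@D2L0 _ _ L q v)).
by apply: eq_bigr => i _; rewrite (@D2LZ _ _ L hL).
Qed.

Variable T : normedModType R.

Lemma D2L_var_diff (phi : T -> V2) (chi : T -> 'rV[R]_n) z :
  differentiable phi z -> differentiable chi z ->
  differentiable (fun y => D2L L (phi y).1 (phi y).2 (chi y)) z.
Proof.
move=> dphi dchi.
have -> : (fun y => D2L L (phi y).1 (phi y).2 (chi y)) =
   \sum_(i < n) (fun y => chi y 0 i * D2L L (phi y).1 (phi y).2 'e_i).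
  by rewrite fct_sumE; apply/funext => y; rewrite D2L_sum.
apply: differentiable_sum => i.
apply: dM.
  have := differentiable_comp dchi (differentiable_coord (chi z) 0 i); by [].
have := differentiable_comp dphi (D2L_smooth 'e_i (phi z)); by [].
Qed.

Lemma DL_comp_diff (phi : T -> V2) z w :
  differentiable phi z ->
  differentiable (fun y => D1L L (phi y).1 (phi y).2 w) z /\
  differentiable (fun y => D2L L (phi y).1 (phi y).2 w) z /\
  differentiable (fun y => L (phi y)) z.
Proof.
move=> dphi; split; first by have := differentiable_comp dphi (D1L_smooth w (phi z)); by [].
split; first by have := differentiable_comp dphi (D2L_smooth w (phi z)); by [].
have := differentiable_comp dphi (@Ldiff _ _ L hL (phi z)); by [].
Qed.

End Spec2.
Arguments DL_comp_diff {R n L} hL {T phi z} w.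
Arguments D2L_var_diff {R n L} hL {T phi chi z}.

Section Spec3.
Variable R : realType.
Variable n : nat.
Variable L : 'rV[R]_n * 'rV[R]_n -> R.
Hypothesis hL : smooth L.

Lemma c11 (z : st R n) : differentiable (fun y : st R n => y.1.1) z.
Proof.
have := differentiable_comp (@fst_differentiable _ _ _ z) (@fst_differentiable _ _ _ z.1); by [].
Qed.
Lemma c12 (z : st R n) : differentiable (fun y : st R n => y.1.2) z.
Proof.
have := differentiable_comp (@fst_differentiable _ _ _ z) (@snd_differentiable _ _ _ z.1); by [].
Qed.
Lemma c21 (z : st R n) : differentiable (fun y : st R n => y.2.1) z.
Proof.
have := differentiable_comp (@snd_differentiable _ _ _ z) (@fst_differentiable _ _ _ z.2); by [].
Qed.
Lemma c22 (z : st R n) : differentiable (fun y : st R n => y.2.2) z.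
Proof.
have := differentiable_comp (@snd_differentiable _ _ _ z) (@snd_differentiable _ _ _ z.2); by [].
Qed.

Lemma vel_diff (z : st R n) : z.2.2 != z.1.2 ->
  differentiable (fun y : st R n => vel y.1 y.2) z.
Proof.
move=> hz.
have h0 : z.2.2 - z.1.2 != 0 by rewrite subr_eq0.
have := differentiableZ2 (dV (dB (c22 z) (c12 z)) h0) (dB (c21 z) (c11 z)).
by [].
Qed.

Lemma sig_diff (b z : st R n) : z.2.2 != z.1.2 -> differentiable (sig L b) z.
Proof.
move=> hz.
have dphi : differentiable (fun y : st R n => (y.1.1, vel y.1 y.2)) z.
  have := differentiable_pair (c11 z) (vel_diff z hz); by [].
have [d1 [d2 dL]] := DL_comp_diff hL b.1.1 dphi.
have [_ [d2' _]] := DL_comp_diff hL b.2.1 dphi.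
have dvv := D2L_var_diff hL dphi (vel_diff z hz).
have t1 : differentiable (fun y : st R n =>
    (b.2.2 - b.1.2) * ener L y.1 y.2) z.
  apply: dM; first exact: dC.
  have := dB dL dvv; by [].
have t2 : differentiable (fun y : st R n =>
    (y.2.2 - y.1.2) * D1L L y.1.1 (vel y.1 y.2) b.1.1) z.
  apply: dM; first exact: dB (c22 z) (c12 z).
  have := d1; by [].
have t3 : differentiable (fun y : st R n =>
    D2L L y.1.1 (vel y.1 y.2) b.2.1 - D2L L y.1.1 (vel y.1 y.2) b.1.1) z.
  have := dB d2' d2; by [].
have := dD (dD t1 t2) t3; by [].
Qed.

End Spec3.

Section Gen8.
Variable R : realType.

Lemma derive_funD (V W : normedModType R) (f g : V -> W) x v :
  differentiable f x -> differentiable g x ->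
  'D_v (fun y => f y + g y) x = 'D_v f x + 'D_v g x.
Proof.
move=> df dg.
have := deriveD (diff_derivable (v := v) df) (diff_derivable (v := v) dg); by [].
Qed.

Lemma derive_comp (V W X : normedModType R) (G : V -> W) (F : W -> X) p u :
  differentiable G p -> differentiable F (G p) ->
  'D_u (fun y => F (G y)) p = 'D_('D_u G p) F (G p).
Proof.
move=> dG dF.
have dc : differentiable (fun y => F (G y)) p.
  have := differentiable_comp dG dF; by [].
rewrite (deriveE (f := fun y => F (G y))) // (deriveE (f := F)) // (deriveE (f := G)) //.
have e := diff_comp dG dF.
by have := congr1 (fun h : V -> X => h u) e.
Qed.

Lemma derive_fst (W X : normedModType R) (x v : W * X) : 'D_v (@fst W X) x = v.1.
Proof.
rewrite deriveE; last exact: fst_differentiable.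
have fl : linear (@fst W X) by [].
pose M := GRing.isLinear.Build _ _ _ _ _ fl.
pose F : {linear (W * X)%type -> W} := HB.pack (@fst W X) M.
have cF : continuous F by move=> y; apply: cvg_fst.
have e := diff_lin (f := F) x cF.
by have := congr1 (fun h => h v) e.
Qed.

Lemma derive_snd (W X : normedModType R) (x v : W * X) : 'D_v (@snd W X) x = v.2.
Proof.
rewrite deriveE; last exact: snd_differentiable.
have fl : linear (@snd W X) by [].
pose M := GRing.isLinear.Build _ _ _ _ _ fl.
pose F : {linear (W * X)%type -> X} := HB.pack (@snd W X) M.
have cF : continuous F by move=> y; apply: cvg_snd.
have e := diff_lin (f := F) x cF.
by have := congr1 (fun h => h v) e.
Qed.

End Gen8.

Section Spec4.
Variable R : realType.
Variable n : nat.
Variable L : 'rV[R]_n * 'rV[R]_n -> R.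
Hypothesis hL : smooth L.

Lemma near_Omega (z : st R n) : z.2.2 != z.1.2 -> \forall y \near z, y.2.2 != y.1.2.
Proof.
move=> hz.
have c := differentiable_continuous (dB (@c22 R n z) (@c12 R n z)).
have h0 : z.2.2 - z.1.2 != 0 by rewrite subr_eq0.
have := cvgr_neq0 _ c h0.
move=> H; near=> y; rewrite -subr_eq0; near: y; exact: H.
Unshelve. all: by end_near.
Qed.

Lemma S_near (z : st R n) b : z.2.2 != z.1.2 ->
  \forall y \near z, derivable (Sact L) y b /\ 'D_b (Sact L) y = sig L b y.
Proof.
move=> hz; have H := near_Omega _ hz; near=> y.
have hy : y.2.2 != y.1.2 by near: y; exact: H.
by case: (S_derive hL y b hy) => d e; split.
Unshelve. all: by end_near.
Qed.

Lemma H_symm (Y : st R n) a b : Y.2.2 != Y.1.2 ->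
  'D_a (sig L b) Y = 'D_b (sig L a) Y.
Proof.
move=> hY.
have := (schwarz (f := Sact L) (gu := sig L a) (gw := sig L b) (S_near Y a hY) (S_near Y b hY)
   (@sig_diff _ _ L hL a Y hY) (@sig_diff _ _ L hL b Y hY)).
by [].
Qed.

Lemma H_lin (Y : st R n) a c d : Y.2.2 != Y.1.2 ->
  'D_a (sig L (c + d)) Y = 'D_a (sig L c) Y + 'D_a (sig L d) Y.
Proof.
move=> hY.
have -> : sig L (c + d) = (fun y => sig L c y + sig L d y).
  by apply/funext => y; rewrite (sigD hL).
exact: derive_funD (@sig_diff _ _ L hL c Y hY) (@sig_diff _ _ L hL d Y hY).
Qed.

Lemma dec_st (x : st R n) : x = (x.1, 0) + (0, x.2).
Proof.
case: x => x1 x2.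
have -> : ((x1, 0) + (0, x2) : st R n) = (x1 + 0, 0 + x2) by [].
by rewrite addr0 add0r.
Qed.

Lemma alg_final (Z : zmodType) (A B C D P Q Sab Sba : Z) :
  P + C = 0 -> Q + D = 0 -> Sab = C + A -> Sba = D + B -> Sab = Sba ->
  A - B = P - Q.
Proof.
move=> hP hQ hA hB e.
have hA' : A = - C + Sab by rewrite hA addKr.
rewrite hA' e hB addrA addrK.
have -> : P = - C by apply/eqP; rewrite -addr_eq0 hP.
have -> : Q = - D by apply/eqP; rewrite -addr_eq0 hQ.
by rewrite opprK.
Qed.

Lemma omega_sig (z u w : st R n) :
  omegaL L z u w = 'D_u (sig L (0, w.2)) z - 'D_w (sig L (0, u.2)) z.
Proof.
have e1 : (fun x => thetaL L x w) = sig L (0, w.2).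
  by apply/funext => x; exact: theta_sig.
have e2 : (fun x => thetaL L x u) = sig L (0, u.2).
  by apply/funext => x; exact: theta_sig.
exact: (f_equal2 (fun f g => 'D_u f z - 'D_w g z) e1 e2).
Qed.

Lemma part2 (U : set (st R n)) (G : st R n -> st R n) :
     open U -> smooth_on U G ->
     (forall p, U p -> p.2.2 != p.1.2 /\ (G p).2.2 != (G p).1.2) ->
     (forall p, U p -> (G p).1 = p.2) ->
     (forall p, U p -> scheme L p.1 p.2 (G p).2) ->
     forall p, U p -> forall u w : st R n,
       pullback_omegaL L G p u w = omegaL L p u w.
Proof.
move=> hU hG hT hG1 hS p Up u w.
have nU : \forall y \near p, U y by apply: hU.
have [hp hY] := hT p Up.
have dG : differentiable G p := hG [::] p Up.
have fstD : forall v, ('D_v G p).1 = v.2.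
  move=> v.
  have e : 'D_v (fun y => (G y).1) p = ('D_v G p).1.
    by rewrite (@derive_comp _ _ _ _ G fst p v dG (@fst_differentiable _ _ _ (G p))) derive_fst.
  rewrite -e (near_eq_derive (f := fun y => (G y).1) (g := snd)).
    exact: derive_snd.
  near=> y; have Uy : U y by near: y; exact: nU.
  exact: hG1.
have EQ : forall (c : pt R n) v,
    'D_v (sig L (0, c)) p + 'D_('D_v G p) (sig L (c, 0)) (G p) = 0.
  move=> c v.
  have F0 : \forall y \near p, sig L (0, c) y + sig L (c, 0) (G y) = (fun _ => 0 : R) y.
    near=> y; have Uy : U y by near: y; exact: nU.
    exact: (EL_sig L y (G y) (hG1 y Uy) (hS y Uy) c).
  have := @near_eq_derive _ _ _ (fun y => sig L (0, c) y + sig L (c, 0) (G y))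
     (fun _ => 0 : R) p v F0.
  have dc : differentiable (fun y => sig L (c, 0) (G y)) p.
    have := differentiable_comp dG (@sig_diff _ _ L hL (c, 0) (G p) hY); by [].
  rewrite derive_funD //; last exact: (@sig_diff _ _ L hL (0, c) p hp).
  rewrite (@derive_comp _ _ _ _ G (sig L (c, 0)) p v dG (@sig_diff _ _ L hL (c, 0) (G p) hY)).
  move=> ->; exact: derive_cst.
rewrite /pullback_omegaL !omega_sig.
have E1 := EQ w.2 u.
have E2 := EQ u.2 w.
have a1 := fstD u.
have b1 := fstD w.
have Sym := H_symm (G p) ('D_u G p) ('D_w G p) hY.
have La := H_lin (G p) ('D_u G p) (('D_w G p).1, 0) (0, ('D_w G p).2) hY.
rewrite -(dec_st ('D_w G p)) in La.
have Lb := H_lin (G p) ('D_w G p) (('D_u G p).1, 0) (0, ('D_u G p).2) hY.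
rewrite -(dec_st ('D_u G p)) in Lb.
rewrite a1 in Lb; rewrite b1 in La.
exact: (@alg_final _ _ _ _ _ _ _ _ _ E1 E2 La Lb Sym).
Unshelve. all: by end_near.
Qed.

End Spec4.

Lemma part1 (R : realType) (n : nat) (L : 'rV[R]_n * 'rV[R]_n -> R) :
  (forall x : nat -> pt R n,
     (forall k, (x k.+1).2 != (x k).2) ->
     (forall k, scheme L (x k) (x k.+1) (x k.+2)) ->
     forall k, energy L (x k) (x k.+1) = - ener L (x k) (x k.+1) /\
               energy L (x k) (x k.+1) = energy L (x 0%N) (x 1%N)).
Proof.
move=> x _ hs.
have E : forall a b, energy L a b = - ener L a b.
  by move=> a b; rewrite /energy /ener opprB.
move=> k; split; first exact: E.
elim: k => // k IH; rewrite -IH !E; congr (- _).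
by have [-> _] := hs k.
Qed.

Theorem mainTheorem5 (R : realType) (n : nat)
    (L : 'rV[R]_n * 'rV[R]_n -> R) (hL : smooth L) :
  (* (i) conservation of energy along any solution *)
  (forall x : nat -> pt R n,
     (forall k, (x k.+1).2 != (x k).2) ->
     (forall k, scheme L (x k) (x k.+1) (x k.+2)) ->
     forall k, energy L (x k) (x k.+1) = - ener L (x k) (x k.+1) /\
               energy L (x k) (x k.+1) = energy L (x 0%N) (x 1%N)) /\
  (* (ii) preservation of the Lagrangian two-form *)
  (forall (U : set (st R n)) (G : st R n -> st R n),
     open U -> smooth_on U G ->
     (forall p, U p -> p.2.2 != p.1.2 /\ (G p).2.2 != (G p).1.2) ->
     (forall p, U p -> (G p).1 = p.2) ->
     (forall p, U p -> scheme L p.1 p.2 (G p).2) ->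
     forall p, U p -> forall u w : st R n,
       pullback_omegaL L G p u w = omegaL L p u w).
Proof.
split; first exact: part1.
exact: (@part2 R n L hL).
Qed.
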